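(* Let $n\ge 2$ and $H\le\operatorname{Sym}(n)$. The set $V_n(H)$ of homeomorphisms of $\mathfrak{C}_n$ described by tables (as in the context) is a group under composition.
   Context: Let $\mathcal{A}_n=\{0,1,\dots,n-1\}$, let $\mathcal{A}_n^*$ be the set of finite words over $\mathcal{A}_n$ (including the empty word), and let $\mathfrak{C}_n=\mathcal{A}_n^{\mathbb{N}}$ (infinite words, product topology). For $u\in\mathcal{A}_n^*$ and $v$ a finite or infinite word, $uv$ denotes concatenation, and $u\le_{pref} v$ means $v=uw$ for some word $w$. A (complete) prefix code of $\mathfrak{C}_n$ is a finite set $S\subset\mathcal{A}_n^*$ such that every $\zeta\in\mathfrak{C}_n$ has exactly one $s\in S$ with $s\le_{pref}\zeta$. A permutation $\sigma\in\operatorname{Sym}(n)$ acts on words letterwise: $\sigma(z_1z_2\cdots)=\sigma(z_1)\sigma(z_2)\cdots$. A table consists of two prefix codes $P=\{p_1,\dots,p_k\}$ and $Q=\{q_1,\dots,q_k\}$ of $\mathfrak{C}_n$ of the same size $k\ge1$ together with $\sigma_i,\tau_i\in H$ ($1\le i\le k$); it describes the homeomorphism of $\mathfrak{C}_n$ sending $p_i\,\sigma_i(u)\mapsto q_i\,\tau_i(u)$ for all $u\in\mathfrak{C}_n$ and all $i$. *)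

(* Defs.v *)
From mathcomp Require Import all_boot all_fingroup.
Set Implicit Arguments. Unset Strict Implicit. Unset Printing Implicit Defensive.

Definition word (n : nat) := seq 'I_n.
Definition cantor (n : nat) := nat -> 'I_n.

Definition wcat n (u : word n) (z : cantor n) : cantor n :=
  fun i => nth (z (i - size u)) u i.

Definition wprefix n (u : word n) (z : cantor n) : Prop :=
  forall i, i < size u -> nth (z i) u i = z i.

Definition prefix_code n (S : seq (word n)) : Prop :=
  uniq S /\ forall z : cantor n, exists! s, s \in S /\ wprefix s z.

Definition pact n (s : {perm 'I_n}) (z : cantor n) : cantor n := fun i => s (z i).

(* a table: the list of rows (p_i, q_i, sigma_i, tau_i), i = 1..k, k >= 1 *)
Definition table n := seq (word n * word n * {perm 'I_n} * {perm 'I_n}).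

Definition is_table n (H : {set {perm 'I_n}}) (T : table n) : Prop :=
  0 < size T /\
  prefix_code [seq r.1.1.1 | r <- T] /\
  prefix_code [seq r.1.1.2 | r <- T] /\
  (forall r, r \in T -> (r.1.2 \in H) && (r.2 \in H)).

Definition describes n (T : table n) (f : cantor n -> cantor n) : Prop :=
  forall r, r \in T -> forall u : cantor n,
    forall j, f (wcat r.1.1.1 (pact r.1.2 u)) j = wcat r.1.1.2 (pact r.2 u) j.

Definition inV n (H : {set {perm 'I_n}}) (f : cantor n -> cantor n) : Prop :=
  exists T : table n, is_table H T /\ describes T f.

Definition cont n (f : cantor n -> cantor n) : Prop :=
  forall (x : cantor n) (m : nat), exists N : nat, forall y : cantor n,
    (forall i, i < N -> y i = x i) -> forall i, i < m -> f y i = f x i.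

Definition homeo n (f : cantor n -> cantor n) : Prop :=
  cont f /\ exists g : cantor n -> cantor n,
    cont g /\ (forall x j, g (f x) j = x j) /\ (forall x j, f (g x) j = x j).

(* Main.v *)
Require Import Defs.
From mathcomp Require Import all_boot all_fingroup.
From mathcomp Require Import zify.
From Stdlib Require Import FunctionalExtensionality.
Set Implicit Arguments. Unset Strict Implicit. Unset Printing Implicit Defensive.

Definition row n := (word n * word n * {perm 'I_n} * {perm 'I_n})%type.

Definition dropc n k (z : cantor n) : cantor n := fun i => z (i + k).

Lemma wcatE n (u : word n) z i :
  wcat u z i = if i < size u then nth (z 0) u i else z (i - size u).
Proof.
rewrite /wcat; case: ltnP => h; first exact: set_nth_default.
by rewrite nth_default.
Qed.

Lemma wcat_prefix n (u : word n) t : wprefix u (wcat u t).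
Proof. move=> i hi; rewrite wcatE hi /=; exact: set_nth_default. Qed.

Lemma prefix_wcat n (u : word n) z : wprefix u z -> z = wcat u (dropc (size u) z).
Proof.
move=> H; apply: functional_extensionality => i; rewrite wcatE.
case: ltnP => hi; first by rewrite -[LHS](H i hi); apply: set_nth_default.
by rewrite /dropc subnK.
Qed.

Lemma wcat_inj n (u : word n) t1 t2 : wcat u t1 = wcat u t2 -> t1 = t2.
Proof.
move=> E; apply: functional_extensionality => i.
have := congr1 (fun f => f (i + size u)) E; rewrite /= !wcatE.
by rewrite ltnNge leq_addl /= addnK.
Qed.

Lemma wcat_cat n (u v : word n) t : wcat (u ++ v) t = wcat u (wcat v t).
Proof.
apply: functional_extensionality => i; rewrite /wcat nth_cat size_cat.
case: (ltnP i (size u)) => h; first exact: set_nth_default.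
by rewrite [in RHS]nth_default // subnDA.
Qed.

Lemma wcat_prefixE n (u v : word n) t : wprefix (u ++ v) (wcat u t) <-> wprefix v t.
Proof.
split=> H.
- have E := prefix_wcat H; rewrite wcat_cat in E.
  rewrite (wcat_inj E); exact: wcat_prefix.
- rewrite (prefix_wcat H) -wcat_cat; exact: wcat_prefix.
Qed.

Lemma pact_wcat n (s : {perm 'I_n}) u t : pact s (wcat u t) = wcat (map s u) (pact s t).
Proof.
apply: functional_extensionality => i; rewrite /pact !wcatE size_map.
case: ifP => h //; by rewrite (nth_map (t 0)).
Qed.

Lemma pactM n (s t : {perm 'I_n}) z : pact s (pact t z) = pact (t * s) z.
Proof. by apply: functional_extensionality => i; rewrite /pact permM. Qed.
Lemma pactK n (s : {perm 'I_n}) z : pact s^-1 (pact s z) = z.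
Proof. by apply: functional_extensionality => i; rewrite /pact permK. Qed.
Lemma pactKV n (s : {perm 'I_n}) z : pact s (pact s^-1 z) = z.
Proof. by apply: functional_extensionality => i; rewrite /pact permKV. Qed.

Lemma pact_prefixE n (s : {perm 'I_n}) u t : wprefix (map s u) (pact s t) <-> wprefix u t.
Proof.
split=> H.
- have E := prefix_wcat H.
  have -> : t = pact s^-1 (pact s t) by rewrite pactK.
  rewrite E pact_wcat (mapK (permK s)); exact: wcat_prefix.
- rewrite (prefix_wcat H) pact_wcat; exact: wcat_prefix.
Qed.

Definition compat n (u v : word n) :=
  take (minn (size u) (size v)) u == take (minn (size u) (size v)) v.

Lemma compatC n (u v : word n) : compat u v = compat v u.
Proof. by rewrite /compat minnC eq_sym. Qed.

Lemma prefix_compat n (u v : word n) z : wprefix u z -> wprefix v z -> compat u v.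
Proof.
move=> Hu Hv; apply/eqP; set k := minn _ _.
have ku : k <= size u by exact: geq_minl.
have kv : k <= size v by exact: geq_minr.
apply: (@eq_from_nth _ (z 0)); first by rewrite !size_takel.
move=> i; rewrite size_takel // => hi.
rewrite !nth_take //.
have hu : i < size u by exact: leq_trans hi ku.
have hv : i < size v by exact: leq_trans hi kv.
by rewrite (set_nth_default (z i) _ hu) (set_nth_default (z i) _ hv) Hu // Hv.
Qed.

Lemma compat_cat n (u v : word n) : compat u v -> size u <= size v -> v = u ++ drop (size u) v.
Proof.
move=> /eqP H h; move: H; rewrite (minn_idPl h) take_size => H.
by rewrite {1}H cat_take_drop.
Qed.

Lemma prefix_catl n (u w : word n) z : wprefix (u ++ w) z -> wprefix u z.
Proof. move=> H; rewrite (prefix_wcat H) wcat_cat; exact: wcat_prefix. Qed.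

Lemma dropc_wcat n (u : word n) t : dropc (size u) (wcat u t) = t.
Proof.
apply: functional_extensionality => i.
by rewrite /dropc wcatE ltnNge leq_addl /= addnK.
Qed.

Lemma map_uniq_inj (T U : eqType) (f : T -> U) s : uniq (map f s) -> {in s &, injective f}.
Proof.
elim: s => //= a s IH /andP [nf us] x y.
rewrite !in_cons => /orP [/eqP -> | hx] /orP [/eqP -> | hy] // E.
- by case/negP: nf; rewrite E; apply: map_f.
- by case/negP: nf; rewrite -E; apply: map_f.
- exact: IH.
Qed.

Definition Pl n (T : table n) := [seq r.1.1.1 | r <- T].
Definition Ql n (T : table n) := [seq r.1.1.2 | r <- T].

Lemma rowP n (T : table n) z : prefix_code (Pl T) ->
  exists a, [/\ a \in T, wprefix a.1.1.1 z &
     forall a', a' \in T -> wprefix a'.1.1.1 z -> a' = a].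
Proof.
case=> U /(_ z) [s [[/mapP [a Ha ->] Hs] Us]].
exists a; split=> // a' Ha' Hp.
apply: (map_uniq_inj U) => //.
symmetry; apply: Us; split => //; exact: (map_f (fun r : row n => r.1.1.1)).
Qed.

Definition pairs n (A B : table n) : seq (row n * row n) :=
  [seq x <- [seq (a, b) | a <- A, b <- B] | compat x.1.1.1.2 x.2.1.1.1].

Lemma mem_pairs n (A B : table n) a b :
  ((a, b) \in pairs A B) = [&& a \in A, b \in B & compat a.1.1.2 b.1.1.1].
Proof.
rewrite mem_filter /= andbC.
have -> : ((a, b) \in [seq (x, y) | x <- A, y <- B]) = (a \in A) && (b \in B).
  apply/allpairsP/andP => [[[x y] [/= hx hy [-> ->]]] | [ha hb]] //.
  by exists (a, b).
by rewrite andbA.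
Qed.

Lemma uniq_pairs n (A B : table n) : uniq A -> uniq B -> uniq (pairs A B).
Proof.
move=> uA uB; apply: filter_uniq; apply: allpairs_uniq => //.
by move=> [? ?] [? ?] _ _.
Qed.

Definition kap n (r : row n) : {perm 'I_n} := (r.2^-1 * r.1.2)%g.
Definition sw n (r : row n) : row n := (r.1.1.2, r.1.1.1, r.2, r.1.2).
Lemma sw_p n (r : row n) : (sw r).1.1.1 = r.1.1.2. Proof. by []. Qed.
Lemma sw_q n (r : row n) : (sw r).1.1.2 = r.1.1.1. Proof. by []. Qed.
Lemma sw_s n (r : row n) : (sw r).1.2 = r.2. Proof. by []. Qed.
Lemma sw_t n (r : row n) : (sw r).2 = r.1.2. Proof. by []. Qed.
Lemma swK n : involutive (@sw n). Proof. by case=> [[[p q] s] t]. Qed.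

Definition Pent n (a b : row n) : word n :=
  if size b.1.1.1 <= size a.1.1.2 then a.1.1.1
  else a.1.1.1 ++ map (kap a) (drop (size a.1.1.2) b.1.1.1).
Definition Qent n (a b : row n) := Pent (sw b) (sw a).
Definition Sent n (a b : row n) : {perm 'I_n} :=
  if size b.1.1.1 <= size a.1.1.2 then a.1.2 else (b.1.2 * kap a)%g.
Definition Tent n (a b : row n) : {perm 'I_n} :=
  if size b.1.1.1 <= size a.1.1.2 then (a.2 * kap (sw b))%g else b.2.
Definition crow n (a b : row n) : row n := (Pent a b, Qent a b, Sent a b, Tent a b).
Definition comp n (A B : table n) : table n := [seq crow x.1 x.2 | x <- pairs A B].
Definition swapT n (T : table n) : table n := map (@sw n) T.

Lemma mem_swapT n (T : table n) r : (sw r \in swapT T) = (r \in T).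
Proof. rewrite mem_map //; exact: inv_inj (@swK n). Qed.

Lemma Pl_swap n (T : table n) : [seq r.1.1.1 | r <- swapT T] = [seq r.1.1.2 | r <- T].
Proof. by rewrite /swapT -map_comp. Qed.
Lemma Ql_swap n (T : table n) : [seq r.1.1.2 | r <- swapT T] = [seq r.1.1.1 | r <- T].
Proof. by rewrite /swapT -map_comp. Qed.

Lemma pairs_sw n (A B : table n) a b :
  ((sw b, sw a) \in pairs (swapT B) (swapT A)) = ((a, b) \in pairs A B).
Proof.
by rewrite !mem_pairs !mem_swapT sw_q sw_p compatC andbCA.
Qed.

Lemma Pent_cat n (a b : row n) : exists e, Pent a b = a.1.1.1 ++ e.
Proof.
rewrite /Pent; case: ifP => _; last by eexists.
by exists [::]; rewrite cats0.
Qed.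

Lemma core n (A B : table n) z : prefix_code (Pl A) -> prefix_code (Pl B) ->
  exists! x, x \in pairs A B /\ wprefix (Pent x.1 x.2) z.
Proof.
move=> cA cB.
have [a [Ha Hpa Ua]] := rowP z cA.
set u := pact a.1.2^-1 (dropc (size a.1.1.1) z).
have Ez : z = wcat a.1.1.1 (pact a.1.2 u) by rewrite /u pactKV -(prefix_wcat Hpa).
set y := wcat a.1.1.2 (pact a.2 u).
have [b [Hb Hpb Ub]] := rowP y cB.
have Hc : compat a.1.1.2 b.1.1.1 := prefix_compat (@wcat_prefix _ a.1.1.2 (pact a.2 u)) Hpb.
have Et : pact a.1.2 u = pact (kap a) (pact a.2 u) by rewrite pactM /kap mulKVg.
have key : forall b', compat a.1.1.2 b'.1.1.1 ->
    wprefix (Pent a b') z <-> wprefix b'.1.1.1 y.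
  move=> b' hc; rewrite /Pent; case: ifP => hs.
  - split=> _ //.
    have hc' : compat b'.1.1.1 a.1.1.2 by rewrite compatC.
    rewrite /y (compat_cat hc' hs) wcat_cat; exact: wcat_prefix.
  - have hl : size a.1.1.2 <= size b'.1.1.1 by rewrite ltnW // ltnNge hs.
    have Eb := compat_cat hc hl.
    move: (drop _ _) Eb => w Eb.
    rewrite Ez wcat_prefixE Et pact_prefixE Eb /y wcat_prefixE.
    by [].
exists (a, b); split.
  split; first by rewrite mem_pairs Ha Hb Hc.
  by rewrite /=; apply/(key b Hc).
case=> a1 b1 [Hx Hp]; move: Hx; rewrite mem_pairs => /and3P [Ha1 Hb1 Hc1].
have [e Ee] := Pent_cat a1 b1.
have ea : a1 = a.
  apply: Ua => //; apply: (@prefix_catl _ _ e); rewrite -Ee; exact: Hp.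
subst a1.
by rewrite (Ub b1 Hb1 (proj1 (key b1 Hc1) Hp)).
Qed.

Lemma coreQ n (A B : table n) z : prefix_code (Ql A) -> prefix_code (Ql B) ->
  exists! x, x \in pairs A B /\ wprefix (Qent x.1 x.2) z.
Proof.
move=> cA cB.
have cA' : prefix_code (Pl (swapT A)) by rewrite /Pl Pl_swap.
have cB' : prefix_code (Pl (swapT B)) by rewrite /Pl Pl_swap.
have [[b' a'] [[Hx Hp] U]] := core z cB' cA'.
exists (sw a', sw b'); split.
  split; first by rewrite -pairs_sw !swK.
  by rewrite /Qent /= !swK.
move=> [a1 b1] [H1 H2].
have H1' : (sw b1, sw a1) \in pairs (swapT B) (swapT A) by rewrite pairs_sw.
case: (U (sw b1, sw a1) (conj H1' H2)) => -> ->.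
by rewrite !swK.
Qed.

Lemma code_of (T : eqType) n (X : seq T) (e : T -> word n) (z0 : cantor n) :
  uniq X -> (forall z, exists! x, x \in X /\ wprefix (e x) z) -> prefix_code (map e X).
Proof.
move=> uX H; split.
  rewrite map_inj_in_uniq // => x1 x2 h1 h2 E.
  have [x [_ U]] := H (wcat (e x1) z0).
  have P1 : x1 \in X /\ wprefix (e x1) (wcat (e x1) z0) by split => //; exact: wcat_prefix.
  have P2 : x2 \in X /\ wprefix (e x2) (wcat (e x1) z0) by split => //; rewrite -E; exact: wcat_prefix.
  by rewrite -(U _ P1) (U _ P2).
move=> z; have [x [[hx hp] U]] := H z.
exists (e x); split; first by split => //; apply: map_f.
by move=> s [/mapP [x' hx' ->] hp']; rewrite (U x').
Qed.

Lemma code_size n (S : seq (word n)) (z0 : cantor n) : prefix_code S -> 0 < size S.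
Proof. move=> [_ /(_ z0) [s [[hs _] _]]]; by case: S hs. Qed.

Lemma descE n (T : table n) f : describes T f -> forall r, r \in T -> forall u,
  f (wcat r.1.1.1 (pact r.1.2 u)) = wcat r.1.1.2 (pact r.2 u).
Proof. move=> D r Hr u; apply: functional_extensionality; exact: D. Qed.

Lemma desc_comp n (A B : table n) f g : describes A g -> describes B f ->
  describes (comp A B) (fun x => f (g x)).
Proof.
move=> /descE DA /descE DB r /mapP [[a b]] Hx -> u j /=.
move: Hx; rewrite mem_pairs => /and3P [Ha Hb Hc].
congr (_ j).
rewrite /crow /=.
case hs : (size b.1.1.1 <= size a.1.1.2).
- have -> : Pent a b = a.1.1.1 by rewrite /Pent hs.
  have -> : Sent a b = a.1.2 by rewrite /Sent hs.
  have -> : Tent a b = (a.2 * kap (sw b))%g by rewrite /Tent hs.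
  have hc' : compat b.1.1.1 a.1.1.2 by rewrite compatC.
  have Ea := compat_cat hc' hs.
  move: (drop _ _) Ea => w Ea.
  have -> : Qent a b = b.1.1.2 ++ map (kap (sw b)) w.
    rewrite /Qent /Pent !sw_p !sw_q; case: ifP => h2; last first.
      by rewrite Ea (drop_size_cat _ (erefl _)).
    have : size w == 0.
      have := congr1 size Ea; rewrite size_cat => e; move: h2; rewrite e.
      by rewrite -{2}(addn0 (size b.1.1.1)) leq_add2l leqn0.
    by rewrite size_eq0 => /eqP ->; rewrite cats0.
  rewrite (DA a Ha) Ea wcat_cat.
  rewrite -(pactKV b.1.2 (wcat w (pact a.2 u))) (DB b Hb).
  by rewrite pactM pact_wcat pactM wcat_cat.
- have hl : size a.1.1.2 <= size b.1.1.1 by rewrite ltnW // ltnNge hs.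
  have Eb := compat_cat Hc hl.
  have -> : Qent a b = b.1.1.2 by rewrite /Qent /Pent !sw_p !sw_q hl.
  have -> : Tent a b = b.2 by rewrite /Tent hs.
  have -> : Sent a b = (b.1.2 * kap a)%g by rewrite /Sent hs.
  have -> : Pent a b = a.1.1.1 ++ map (kap a) (drop (size a.1.1.2) b.1.1.1) by rewrite /Pent hs.
  move: (drop _ _) Eb => w Eb.
  rewrite wcat_cat -pactM -pact_wcat /kap -pactM (DA a Ha) pactKV -wcat_cat -Eb (DB b Hb).
  by [].
Qed.

Lemma table_comp n (H : {group {perm 'I_n}}) (A B : table n) (z0 : cantor n) :
  is_table H A -> is_table H B -> is_table H (comp A B).
Proof.
move=> [_ [pA [qA hA]]] [_ [pB [qB hB]]].
have uA : uniq A := map_uniq pA.1.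
have uB : uniq B := map_uniq pB.1.
have cP : prefix_code [seq r.1.1.1 | r <- comp A B].
  rewrite /comp -map_comp; apply: (code_of z0 (uniq_pairs uA uB)) => z.
  exact: core.
have cQ : prefix_code [seq r.1.1.2 | r <- comp A B].
  rewrite /comp -map_comp; apply: (code_of z0 (uniq_pairs uA uB)) => z.
  exact: coreQ.
split; first by have := code_size z0 cP; rewrite size_map.
split; first exact: cP.
split; first exact: cQ.
move=> r /mapP [[a b]] /= hx ->; move: hx; rewrite mem_pairs => /and3P [ha hb _].
case/andP: (hA a ha) => s1 t1; case/andP: (hB b hb) => s2 t2.
rewrite /crow /Sent /Tent /kap /sw /=; case: ifP => _; apply/andP; split;
  by repeat (apply: groupM || apply: groupVr).
Qed.

Definition prefb n (u : word n) (z : cantor n) :=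
  all (fun i => nth (z i) u i == z i) (iota 0 (size u)).

Lemma prefbP n u z : reflect (wprefix u z) (@prefb n u z).
Proof.
apply: (iffP allP) => H i.
  move=> hi; apply/eqP/H; by rewrite mem_iota add0n leq0n hi.
rewrite mem_iota add0n => /andP [_ hi]; apply/eqP; exact: H.
Qed.

Definition r0 n : row n := ([::], [::], 1%g, 1%g).
Definition applyT n (T : table n) (z : cantor n) : cantor n :=
  let r := nth (r0 n) T (find (fun r : row n => prefb r.1.1.1 z) T) in
  wcat r.1.1.2 (pact r.2 (pact r.1.2^-1 (dropc (size r.1.1.1) z))).

Lemma descz n (T : table n) f a z : describes T f -> a \in T -> wprefix a.1.1.1 z ->
  f z = wcat a.1.1.2 (pact a.2 (pact a.1.2^-1 (dropc (size a.1.1.1) z))).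
Proof.
move=> D Ha Hp.
have E : z = wcat a.1.1.1 (pact a.1.2 (pact a.1.2^-1 (dropc (size a.1.1.1) z))).
  by rewrite pactKV -(prefix_wcat Hp).
by have := descE D Ha (pact a.1.2^-1 (dropc (size a.1.1.1) z)); rewrite -E.
Qed.

Lemma applyT_desc n (T : table n) : prefix_code (Pl T) -> describes T (applyT T).
Proof.
move=> cT a Ha u j.
set z := wcat a.1.1.1 (pact a.1.2 u).
have hz : wprefix a.1.1.1 z := @wcat_prefix _ a.1.1.1 (pact a.1.2 u).
have hh : has (fun r : row n => prefb r.1.1.1 z) T.
  by apply/hasP; exists a => //; apply/prefbP.
rewrite /applyT /=.
have hi : find (fun r : row n => prefb r.1.1.1 z) T < size T by rewrite -has_find.
have r_in := mem_nth (r0 n) hi.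
have r_p : wprefix (nth (r0 n) T (find (fun r : row n => prefb r.1.1.1 z) T)).1.1.1 z.
  exact: (elimT (prefbP _ _) (nth_find (r0 n) hh)).
have [b [_ _ Ub]] := rowP z cT.
have -> : nth (r0 n) T (find (fun r : row n => prefb r.1.1.1 z) T) = a.
  by rewrite (Ub _ r_in r_p) (Ub _ Ha hz).
by rewrite /z dropc_wcat pactK.
Qed.

Lemma sumn_ge (T : eqType) (f : T -> nat) s x : x \in s -> f x <= sumn (map f s).
Proof.
elim: s => //= y s IH; rewrite in_cons => /orP [/eqP -> | h].
  exact: leq_addr.
exact: leq_trans (IH h) (leq_addl _ _).
Qed.

Lemma cont_T n (T : table n) f : prefix_code (Pl T) -> describes T f -> cont f.
Proof.
move=> cT D x m.
exists (sumn (map (fun r : row n => size r.1.1.1) T) + m) => y hy i hi.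
have [a [Ha Hpa _]] := rowP x cT.
have hN : size a.1.1.1 + m <= sumn (map (fun r : row n => size r.1.1.1) T) + m.
  by rewrite leq_add2r; exact: (sumn_ge (fun r : row n => size r.1.1.1)).
have Hpy : wprefix a.1.1.1 y.
  move=> k hk.
  have ek : y k = x k by apply: hy; exact: leq_trans (ltn_addr m hk) hN.
  by rewrite ek; exact: Hpa.
rewrite (descz D Ha Hpy) (descz D Ha Hpa) /wcat /pact /dropc /=.
rewrite hy //; apply: (leq_trans _ hN); rewrite addnC ltn_add2l.
exact: leq_ltn_trans (leq_subr _ _) hi.
Qed.

Lemma swap_table n (H : {group {perm 'I_n}}) T : is_table H T -> is_table H (swapT T).
Proof.
move=> [h0 [cp [cq hH]]]; split; first by rewrite size_map.
split; first by rewrite Pl_swap.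
split; first by rewrite Ql_swap.
move=> r /mapP [a Ha ->]; rewrite /sw /=; by case/andP: (hH a Ha) => -> ->.
Qed.

Lemma inv_ok n (H : {group {perm 'I_n}}) T f : is_table H T -> describes T f ->
  [/\ is_table H (swapT T), describes (swapT T) (applyT (swapT T)),
   (forall x j, applyT (swapT T) (f x) j = x j) &
   (forall x j, f (applyT (swapT T) x) j = x j)].
Proof.
move=> hT D; have hS := swap_table hT.
have cP : prefix_code (Pl T) := hT.2.1.
have cS : prefix_code (Pl (swapT T)) := hS.2.1.
have Dg := applyT_desc cS.
split => // x j.
- have [a [Ha Hpa _]] := rowP x cP.
  rewrite (descz D Ha Hpa).
  have Ha' : sw a \in swapT T by rewrite mem_swapT.
  have := Dg (sw a) Ha' (pact a.1.2^-1 (dropc (size a.1.1.1) x)) j.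
  rewrite sw_p sw_q sw_s sw_t => ->.
  by rewrite pactKV -(prefix_wcat Hpa).
- have [a' [Ha' Hp _]] := rowP x cS.
  have [a Ha ea] := mapP Ha'; subst a'.
  rewrite (descz Dg Ha' Hp) !sw_p !sw_q !sw_s !sw_t (descE D Ha).
  rewrite sw_p in Hp.
  by rewrite pactKV -(prefix_wcat Hp).
Qed.

Theorem mainTheorem4 (n : nat) (H : {group {perm 'I_n}}) (hn : 2 <= n) :
  (forall f, inV H f -> homeo f) /\
  inV H (fun x => x) /\
  (forall f g, inV H f -> inV H g -> inV H (fun x => f (g x))) /\
  (forall f, inV H f -> exists g, inV H g /\
      (forall x j, g (f x) j = x j) /\ (forall x j, f (g x) j = x j)).
Proof.
have h0 : 0 < n by lia.
pose z0 : cantor n := fun _ => Ordinal h0.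
split.
  move=> f [T [hT D]]; have [hS Dg i1 i2] := inv_ok hT D.
  split; first exact: (cont_T hT.2.1 D).
  exists (applyT (swapT T)); split => //; exact: (cont_T hS.2.1 Dg).
split.
  exists [:: ([::], [::], 1%g, 1%g)]; split; last first.
    by move=> r; rewrite mem_seq1 => /eqP -> u j.
  split => //.
  have c1 : prefix_code [:: ([::] : word n)].
    split => // z; exists [::]; split; first by split => //; rewrite mem_seq1.
    by move=> s [] ; rewrite mem_seq1 => /eqP ->.
  split; first exact: c1.
  split; first exact: c1.
  by move=> r; rewrite mem_seq1 => /eqP -> /=; rewrite group1.
split.
  move=> f g [Tf [hf Df]] [Tg [hg Dg]].
  exists (comp Tg Tf); split; first exact: table_comp z0 hg hf.
  exact: desc_comp.
move=> f [T [hT D]]; have [hS Dg i1 i2] := inv_ok hT D.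
exists (applyT (swapT T)); split => //.
by exists (swapT T).
Qed.
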